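(* Let $\Phi=(A;A^*;\{E_i\}_{i=0}^d;\{E^*_i\}_{i=0}^d)$ be a Leonard system in $\mathcal A$ with eigenvalue sequence $\theta_0,\dots,\theta_d$, dual eigenvalue sequence $\theta^*_0,\dots,\theta^*_d$ and second split sequence $\phi_1,\dots,\phi_d$. Then $$\nu=\frac{\eta_d(\theta_0)\,\eta^*_d(\theta^*_0)}{\phi_1\phi_2\cdots\phi_d},\qquad\text{i.e.}\qquad \frac{1}{\mathrm{tr}(E_0E^*_0)}=\frac{\prod_{h=1}^{d}(\theta_0-\theta_h)\prod_{h=1}^d(\theta^*_0-\theta^*_h)}{\phi_1\phi_2\cdots\phi_d}.$$
   Context: Let $\mathbb K$ be a field, $d\ge 0$ an integer, and $\mathcal A$ a $\mathbb K$-algebra isomorphic to the full matrix algebra $\mathrm{Mat}_{d+1}(\mathbb K)$; $I$ is its identity. An element of $\mathcal A$ is multiplicity-free if it has $d+1$ mutually distinct eigenvalues in $\mathbb K$. If $A$ is multiplicity-free with eigenvalues $\theta_0,\dots,\theta_d$, the primitive idempotent of $A$ associated with $\theta_i$ is $E_i=\prod_{j\ne i}(A-\theta_jI)/(\theta_i-\theta_j)$. A Leonard system in $\mathcal A$ is a sequence $\Phi=(A;A^*;\{E_i\}_{i=0}^d;\{E^*_i\}_{i=0}^d)$ such that (i) $A,A^*\in\mathcal A$ are multiplicity-free; (ii) $E_0,\dots,E_d$ is an ordering of the primitive idempotents of $A$; (iii) $E^*_0,\dots,E^*_d$ is an ordering of the primitive idempotents of $A^*$; (iv) $E_iA^*E_j=0$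 if $|i-j|>1$ and $E_iA^*E_j\ne0$ if $|i-j|=1$ ($0\le i,j\le d$); (v) $E^*_iAE^*_j=0$ if $|i-j|>1$ and $E^*_iAE^*_j\ne0$ if $|i-j|=1$ ($0\le i,j\le d$). Here $A^*$ is merely notation (not an adjoint). $\theta_i$ (resp. $\theta^*_i$) is the eigenvalue of $A$ (resp. $A^*$) associated with $E_i$ (resp. $E^*_i$). The scalar $\mathrm{tr}(E_0E^*_0)$ is nonzero and $\nu$ is its inverse. First split sequence of a Leonard system $\Psi=(B;B^*;\{F_i\};\{F^*_i\})$ with eigenvalues $\sigma_i$ (for $F_i$) and dual eigenvalues $\sigma^*_i$ (for $F^*_i$): on an irreducible module $V$, $U_i=(F^*_0V+\cdots+F^*_iV)\cap(F_iV+\cdots+F_dV)$ is $1$-dimensional and, for $1\le i\le d$, an eigenspace of $(B-\sigma_{i-1}I)(B^*-\sigma^*_iI)$ with nonzero eigenvalue, denoted $\varphi_i(\Psi)$. The second split sequence of $\Phi$ is $\phi_i=\varphi_i(\Phi^{\Downarrow})$, where $\Phi^{\Downarrow}=(A;A^*;\{E_{d-i}\}_{i=0}^d;\{E^*_i\}_{i=0}^d)$ (also a Leonard system). Polynomials: $\eta_i=\prod_{h=0}^{i-1}(\lambda-\theta_{d-h})$, $\eta^*_i=\prod_{h=0}^{i-1}(\lambda-\theta^*_{d-h})$. *)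

(* Defs.v *)
(* The algebra \mathcal A is taken to be 'M[K]_(d.+1) itself. *)
From HB Require Import structures.
From mathcomp Require Import all_boot all_order all_algebra.
Set Implicit Arguments.
Unset Strict Implicit.
Unset Printing Implicit Defensive.
Import GRing.Theory.
Local Open Scope ring_scope.

Section Leonard.
Variables (K : fieldType) (d : nat).
Local Notation n := d.+1.
Local Notation MA := 'M[K]_n.

Definition mult_free_with (A : MA) (th : 'I_n -> K) : Prop :=
  injective th /\ forall i, eigenvalue A (th i).

Definition prim_idem (A : MA) (th : 'I_n -> K) (i : 'I_n) : MA :=
  \prod_(j < n | j != i) ((th i - th j)^-1 *: (A - (th j)%:M)).

(* Leonard system (A; A*; {E_i}; {E*_i}) where E_i = prim_idem A th i and
   E*_i = prim_idem As ths i. *)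
Definition leonard_system (A As : MA) (th ths : 'I_n -> K) : Prop :=
  [/\ mult_free_with A th & mult_free_with As ths] /\
  [/\ (forall i j : 'I_n, ((i + 1 < j)%N || (j + 1 < i)%N) ->
         prim_idem A th i *m As *m prim_idem A th j = 0),
      (forall i j : 'I_n, ((i.+1 == j)%N || (j.+1 == i)%N) ->
         prim_idem A th i *m As *m prim_idem A th j != 0),
      (forall i j : 'I_n, ((i + 1 < j)%N || (j + 1 < i)%N) ->
         prim_idem As ths i *m A *m prim_idem As ths j = 0) &
      (forall i j : 'I_n, ((i.+1 == j)%N || (j.+1 == i)%N) ->
         prim_idem As ths i *m A *m prim_idem As ths j != 0)].

(* membership of a column vector u in F_{h_1} V + ... (over the h with P h),
   V = 'cV_n the standard (irreducible) module *)
Definition in_sum_images (F : 'I_n -> MA) (P : pred 'I_n) (u : 'cV[K]_n) : Prop :=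
  exists w : 'I_n -> 'cV[K]_n, u = \sum_(h < n | P h) F h *m w h.

Definition in_U (B Bs : MA) (sig sigs : 'I_n -> K) (i : 'I_n) (u : 'cV[K]_n) : Prop :=
  in_sum_images (prim_idem Bs sigs) (fun h => (h <= i)%N) u /\
  in_sum_images (prim_idem B sig) (fun h => (i <= h)%N) u.

(* phi is the first split sequence of the Leonard system (B; B*; ...):
   for 1 <= i <= d, phi i is the eigenvalue of (B - sig_{i-1} I)(B* - sigs_i I)
   on the (1-dimensional) space U_i. *)
Definition is_first_split_seq (B Bs : MA) (sig sigs : 'I_n -> K)
    (phi : 'I_n -> K) : Prop :=
  forall i : 'I_n, (0 < i)%N ->
    exists2 u : 'cV[K]_n, u != 0 /\ in_U B Bs sig sigs i u &
      (B - (sig (inord i.-1))%:M) *m (Bs - (sigs i)%:M) *m u = phi i *: u.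

(* second split sequence: first split sequence of Phi^Down, whose
   idempotent ordering is E_d, ..., E_0 (eigenvalues th (d - i)). *)
Definition is_second_split_seq (A As : MA) (th ths : 'I_n -> K)
    (phi : 'I_n -> K) : Prop :=
  is_first_split_seq A As (fun i => th (rev_ord i)) ths phi.

End Leonard.

(* Main.v *)
Require Import Defs.
From HB Require Import structures.
From mathcomp Require Import all_boot all_order all_algebra.
From mathcomp Require Import zify ring.
Import GRing.Theory.
Local Open Scope ring_scope.

Module Aux.
Set Implicit Arguments.
Unset Strict Implicit.
Lemma eig_col (K : fieldType) (n : nat) (A : 'M[K]_n) a :
  eigenvalue A a -> exists2 v : 'cV_n, A *m v = a *: v & v != 0.
Proof.
move=> ev.
have evT : eigenvalue A^T a.
  move: ev; rewrite /eigenvalue /eigenspace !kermx_eq0 !row_free_unit.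
  by rewrite -unitmx_tr linearB /= tr_scalar_mx.
case/eigenvalueP: evT => v vA vnz; exists v^T; last by rewrite trmx_eq0.
by rewrite -[A]trmxK -trmx_mul vA linearZ.
Qed.

Lemma prod_mx_act (K : fieldType) (n : nat) (I : finType) (P : pred I)
   (M : I -> 'M[K]_n.+1) (s : I -> K) (v : 'cV_n.+1) :
  (forall i, P i -> M i *m v = s i *: v) ->
  (\prod_(i | P i) M i) *m v = (\prod_(i | P i) s i) *: v.
Proof.
move=> H; apply: (big_rec2 (fun (x : 'M_n.+1) y => x *m v = y *: v)) => [|i x y Pi IH]; first by rewrite mul1mx scale1r.
by rewrite -mulmxE -mulmxA IH -scalemxAr H // scalerA mulrC.
Qed.

Definition Xm (K : fieldType) n (v : 'I_n -> 'cV[K]_n) : 'M[K]_n :=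
  \matrix_(i, j) v j i 0.

Lemma Xm_mul (K : fieldType) n (v : 'I_n -> 'cV[K]_n) (c : 'cV_n) :
  Xm v *m c = \sum_j c j 0 *: v j.
Proof.
apply/matrixP => i k; rewrite !mxE summxE; apply: eq_bigr => j _.
by rewrite !mxE ord1 mulrC.
Qed.

Lemma Xm_unit (K : fieldType) n (v : 'I_n -> 'cV[K]_n) :
  (forall c : 'cV_n, \sum_j c j 0 *: v j = 0 -> c = 0) -> Xm v \in unitmx.
Proof.
move=> H; rewrite unitmxE unitfE; apply/negP.
rewrite -(det_tr (Xm v)) => /det0P [w wnz].
move=> wX; move/eqP: wnz; apply; apply: trmx_inj; rewrite linear0; apply: H.
by rewrite -Xm_mul -[_ *m _]trmxK trmx_mul trmxK wX linear0.
Qed.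

Definition coef (K : fieldType) n (v : 'I_n -> 'cV[K]_n) (k : 'I_n) (w : 'cV_n) : K :=
  (invmx (Xm v) *m w) k 0.

Section Coef.
Variables (K : fieldType) (n : nat) (v : 'I_n -> 'cV[K]_n).
Hypothesis U : Xm v \in unitmx.

Lemma cf_sum (c : 'I_n -> K) k : coef v k (\sum_j c j *: v j) = c k.
Proof.
have -> : \sum_j c j *: v j = Xm v *m (\col_j c j).
  by rewrite Xm_mul; apply: eq_bigr => j _; rewrite mxE.
by rewrite /coef mulKmx // mxE.
Qed.

Lemma cf_decomp w : w = \sum_j coef v j w *: v j.
Proof. by rewrite -Xm_mul mulKVmx. Qed.

Lemma cfDZ k a w w' : coef v k (a *: w + w') = a * coef v k w + coef v k w'.
Proof. by rewrite /coef mulmxDr -scalemxAr !mxE. Qed.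

Lemma cfD k w w' : coef v k (w + w') = coef v k w + coef v k w'.
Proof. by rewrite /coef mulmxDr !mxE. Qed.

Lemma cfZ k a w : coef v k (a *: w) = a * coef v k w.
Proof. by rewrite /coef -scalemxAr !mxE. Qed.

Lemma cfN k w : coef v k (- w) = - coef v k w.
Proof. by rewrite /coef mulmxN !mxE. Qed.

Lemma cfB k w w' : coef v k (w - w') = coef v k w - coef v k w'.
Proof. by rewrite cfD cfN. Qed.

Lemma cf0 k : coef v k 0 = 0.
Proof. by rewrite /coef mulmx0 mxE. Qed.

Lemma cf_big (I : Type) (r : seq I) (P : pred I) (f : I -> 'cV_n) k :
  coef v k (\sum_(i <- r | P i) f i) = \sum_(i <- r | P i) coef v k (f i).
Proof. by rewrite /coef mulmx_sumr summxE. Qed.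

Lemma cf_eq0 w : (forall k, coef v k w = 0) -> w = 0.
Proof.
move=> H; rewrite (cf_decomp w); apply: big1 => j _; by rewrite H scale0r.
Qed.

Lemma cf_vec j k : coef v k (v j) = (k == j)%:R.
Proof.
have -> : v j = \sum_i (i == j)%:R *: v i.
  rewrite (bigD1 j) //= eqxx scale1r big1 ?addr0 // => i /negbTE ->.
  by rewrite scale0r.
by rewrite cf_sum.
Qed.

Lemma cf_trace (M : 'M_n) : \tr M = \sum_j coef v j (M *m v j).
Proof.
have -> : \tr M = \tr (invmx (Xm v) *m M *m Xm v).
  by rewrite mxtrace_mulC mulmxA mulmxV // mul1mx.
rewrite /mxtrace; apply: eq_bigr => j _.
rewrite /coef mulmxA !mxE; apply: eq_bigr => k _; by rewrite !mxE.
Qed.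

End Coef.

Lemma prim_idem_act (K : fieldType) (d : nat) (A : 'M[K]_d.+1) (th : 'I_d.+1 -> K)
    (j k : 'I_d.+1) (w : 'cV_d.+1) :
  injective th -> A *m w = th j *: w ->
  \big[*%R/1]_(i < d.+1 | i != k) ((th k - th i)^-1 *: (A - (th i)%:M)) *m w
   = if k == j then w else 0.
Proof.
move=> thI Aw.
rewrite (prod_mx_act (s := fun i => (th k - th i)^-1 * (th j - th i))); last first.
  by move=> i _; rewrite -scalemxAl mulmxBl Aw mul_scalar_mx -scalerBl scalerA.
case: eqP => [<-|/eqP kj].
  rewrite big1 ?scale1r // => i ik; rewrite mulVf // subr_eq0.
  by apply/eqP => /thI /eqP; rewrite eq_sym (negbTE ik).
by rewrite (bigD1 j) 1?eq_sym //= subrr mulr0 mul0r scale0r.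
Qed.

Lemma col_zero (K : fieldType) n (M : 'M[K]_n) :
  (forall w : 'cV_n, M *m w = 0) -> M = 0.
Proof.
move=> H; apply/matrixP => i k; have := H (delta_mx k 0).
by rewrite -colE => /matrixP /(_ i 0); rewrite !mxE.
Qed.

Lemma tri_up (K : fieldType) n (a : 'I_n -> K) (g : 'I_n -> 'I_n -> K) (lo : nat) :
  (forall m k : 'I_n, (k < m)%N -> g m k = 0) -> (forall m, g m m != 0) ->
  (forall m : 'I_n, (lo <= m)%N -> \sum_k a k * g m k = 0) ->
  forall k : 'I_n, (lo <= k)%N -> a k = 0.
Proof.
move=> gL gD H.
suff S : forall t (k : 'I_n), (lo <= k)%N -> (n - t <= k)%N -> a k = 0.
  by move=> k lk; apply: (S n) => //; rewrite subnn.
elim=> [|t IH] k lk.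
  by rewrite subn0 leqNgt ltn_ord.
move=> tk; case: (leqP (n - t) k) => [|kt]; first exact: IH.
have := H k lk; rewrite (bigD1 k) //= big1 ?addr0.
  by move/eqP; rewrite mulf_eq0 (negbTE (gD k)) orbF => /eqP.
move=> j jk; case: (ltngtP j k) => [jlt|kj|/val_inj/eqP]; last by rewrite (negbTE jk).
  by rewrite gL // mulr0.
rewrite IH ?mul0r //; first by apply: leq_trans (ltnW kj).
move: kj tk kt; move: (val j) (val k) => J L; lia.
Qed.

Lemma tri_down (K : fieldType) n (a : 'I_n -> K) (g : 'I_n -> 'I_n -> K) (hi : nat) :
  (forall m k : 'I_n, (m < k)%N -> g m k = 0) -> (forall m, g m m != 0) ->
  (forall m : 'I_n, (m < hi)%N -> \sum_k a k * g m k = 0) ->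
  forall k : 'I_n, (k < hi)%N -> a k = 0.
Proof.
move=> gU gD H.
suff S : forall t (k : 'I_n), (k < hi)%N -> (k < t)%N -> a k = 0.
  by move=> k lk; apply: (S n) => //.
elim=> [|t IH] k lk //.
move=> tk; case: (ltnP k t) => [|kt]; first exact: IH.
have := H k lk; rewrite (bigD1 k) //= big1 ?addr0.
  by move/eqP; rewrite mulf_eq0 (negbTE (gD k)) orbF => /eqP.
move=> j jk; case: (ltngtP j k) => [jlt|kj|/val_inj/eqP]; last by rewrite (negbTE jk).
  rewrite IH ?mul0r //; first by apply: ltn_trans lk.
  move: jlt kt tk; move: (val j) (val k) => J L; lia.
by rewrite gU // mulr0.
Qed.

Lemma scaleI (K : fieldType) m (a : K) (x y : 'cV[K]_m) :
  a != 0 -> a *: x = a *: y -> x = y.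
Proof.
move=> a0 E; have := congr1 (fun z => a^-1 *: z) E.
by rewrite /= !scalerA mulVf // !scale1r.
Qed.

Lemma scaleIv (K : fieldType) m (a b : K) (x : 'cV[K]_m) :
  x != 0 -> a *: x = b *: x -> a = b.
Proof.
move=> x0 /eqP; rewrite -subr_eq0 -scalerBl scaler_eq0 (negbTE x0) orbF subr_eq0.
by move/eqP.
Qed.

Section Leo.
Variables (K : fieldType) (d : nat) (A As : 'M[K]_d.+1) (th ths : 'I_d.+1 -> K).
Local Notation n := d.+1.
Variables (v vs : 'I_n -> 'cV[K]_n).
Hypotheses (thI : injective th) (thsI : injective ths).
Hypotheses (vA : forall j, A *m v j = th j *: v j) (vnz : forall j, v j != 0).
Hypotheses (vsA : forall j, As *m vs j = ths j *: vs j) (vsnz : forall j, vs j != 0).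
Hypothesis L1 : forall i j : 'I_n, ((i + 1 < j)%N || (j + 1 < i)%N) ->
         prim_idem A th i *m As *m prim_idem A th j = 0.
Hypothesis L3 : forall i j : 'I_n, ((i + 1 < j)%N || (j + 1 < i)%N) ->
         prim_idem As ths i *m A *m prim_idem As ths j = 0.
Hypothesis L4 : forall i j : 'I_n, ((i.+1 == j)%N || (j.+1 == i)%N) ->
         prim_idem As ths i *m A *m prim_idem As ths j != 0.

Lemma E_vec (B : 'M[K]_n) (t : 'I_n -> K) (u : 'I_n -> 'cV[K]_n) k j :
  injective t -> (forall j, B *m u j = t j *: u j) ->
  prim_idem B t k *m u j = if k == j then u j else 0.
Proof. by move=> tI uB; apply: prim_idem_act. Qed.

Lemma gen_unit (B : 'M[K]_n) (t : 'I_n -> K) (u : 'I_n -> 'cV[K]_n) :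
  injective t -> (forall j, B *m u j = t j *: u j) -> (forall j, u j != 0) ->
  Xm u \in unitmx.
Proof.
move=> tI uB unz; apply: Xm_unit => c H; apply/matrixP => k z; rewrite ord1 mxE.
have := congr1 (mulmx (prim_idem B t k)) H.
rewrite mulmx0 mulmx_sumr (bigD1 k) //= big1 ?addr0.
  by rewrite -scalemxAr E_vec // eqxx => /eqP; rewrite scaler_eq0 (negbTE (unz k)) orbF => /eqP.
by move=> i ik; rewrite -scalemxAr E_vec // eq_sym (negbTE ik) scaler0.
Qed.

Lemma gen_E (B : 'M[K]_n) (t : 'I_n -> K) (u : 'I_n -> 'cV[K]_n) k w :
  injective t -> (forall j, B *m u j = t j *: u j) -> Xm u \in unitmx ->
  prim_idem B t k *m w = coef u k w *: u k.
Proof.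
move=> tI uB U; rewrite {1}(cf_decomp U w) mulmx_sumr (bigD1 k) //= big1 ?addr0.
  by rewrite -scalemxAr E_vec // eqxx.
by move=> i ik; rewrite -scalemxAr E_vec // eq_sym (negbTE ik) scaler0.
Qed.

Lemma gen_coefM (B : 'M[K]_n) (t : 'I_n -> K) (u : 'I_n -> 'cV[K]_n) k w :
  (forall j, B *m u j = t j *: u j) -> Xm u \in unitmx ->
  coef u k (B *m w) = t k * coef u k w.
Proof.
move=> uB U; rewrite {1}(cf_decomp U w) mulmx_sumr.
have -> : \sum_i B *m (coef u i w *: u i) = \sum_i (coef u i w * t i) *: u i.
  by apply: eq_bigr => i _; rewrite -scalemxAr uB scalerA.
by rewrite (cf_sum U (fun i => coef u i w * t i)) mulrC.
Qed.

Lemma gen_coefAct (M : 'M[K]_n) (u : 'I_n -> 'cV[K]_n) k w :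
  Xm u \in unitmx ->
  coef u k (M *m w) = \sum_j coef u j w * coef u k (M *m u j).
Proof.
move=> U; rewrite {1}(cf_decomp U w) mulmx_sumr cf_big //.
by apply: eq_bigr => j _; rewrite -scalemxAr cfZ.
Qed.

Let Uv := gen_unit thI vA vnz.
Let Us := gen_unit thsI vsA vsnz.

Lemma coef_subC (B : 'M[K]_n) (u : 'I_n -> 'cV[K]_n) k (c : K) w :
  Xm u \in unitmx ->
  coef u k ((B - c%:M) *m w) = coef u k (B *m w) - c * coef u k w.
Proof. by move=> U; rewrite mulmxBl mul_scalar_mx cfB // cfZ. Qed.

Lemma tridiag (k j : 'I_n) : ((k + 1 < j)%N || (j + 1 < k)%N) ->
  coef v k (As *m v j) = 0.
Proof.
move=> kj; have := L1 kj.
move/(congr1 (fun M => M *m v j)); rewrite mul0mx -mulmxA.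
rewrite (gen_E _ _ thI vA Uv) cf_vec // eqxx scale1r.
rewrite -mulmxA (gen_E _ _ thI vA Uv) => /eqP.
by rewrite scaler_eq0 (negbTE (vnz k)) orbF => /eqP.
Qed.

Lemma tridiag_s (k j : 'I_n) : ((k + 1 < j)%N || (j + 1 < k)%N) ->
  coef vs k (A *m vs j) = 0.
Proof.
move=> kj; have := L3 kj.
move/(congr1 (fun M => M *m vs j)); rewrite mul0mx -mulmxA.
rewrite (gen_E _ _ thsI vsA Us) cf_vec // eqxx scale1r.
rewrite -mulmxA (gen_E _ _ thsI vsA Us) => /eqP.
by rewrite scaler_eq0 (negbTE (vsnz k)) orbF => /eqP.
Qed.

Lemma tridiag_s_nz (k j : 'I_n) : (j.+1 == k)%N -> coef vs k (A *m vs j) != 0.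
Proof.
move=> jk; have := L4 (i := k) (j := j); rewrite jk orbT => /(_ isT).
apply: contra => /eqP c0; apply/eqP; apply: col_zero => w.
rewrite -mulmxA (gen_E _ _ thsI vsA Us) -!scalemxAr -mulmxA.
by rewrite (gen_E _ _ thsI vsA Us) c0 scale0r scaler0.
Qed.


Fixpoint xs (i : nat) : 'cV[K]_n :=
  if i is i'.+1 then (A - (th (inord (d - i')))%:M) *m xs i' else vs ord0.

Lemma xs_up i (k : 'I_n) : (i < k)%N -> coef vs k (xs i) = 0.
Proof.
elim: i k => [|i IH] k ik /=.
  by rewrite cf_vec //; case: eqP => // kE; rewrite kE in ik.
rewrite coef_subC // IH ?mulr0 ?subr0; last by apply: ltnW.
rewrite gen_coefAct //; apply: big1 => j _.
case: (ltnP i j) => [ij|ji]; first by rewrite IH ?mul0r.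
by rewrite tridiag_s ?mulr0 // orbC; apply/orP; left; rewrite addn1; apply: leq_ltn_trans ik.
Qed.

Lemma xs_diag i : (i <= d)%N -> coef vs (inord i) (xs i) != 0.
Proof.
elim: i => [|i IH] id /=.
  rewrite cf_vec //; have -> : (inord 0 : 'I_n) == ord0 by apply/eqP/val_inj; rewrite /= inordK.
  by rewrite oner_neq0.
rewrite coef_subC // xs_up ?mulr0 ?subr0; last by rewrite inordK.
rewrite gen_coefAct // (bigD1 (inord i)) //= big1 ?addr0.
  rewrite mulf_neq0 ?IH 1?ltnW //; apply: tridiag_s_nz; rewrite !inordK //; lia.
move=> j ji; case: (ltnP i j) => [ij|jle]; first by rewrite xs_up ?mul0r.
rewrite tridiag_s ?mulr0 //; apply/orP; right; rewrite inordK; last lia.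
have jlt : (j < i)%N.
  by rewrite ltn_neqAle jle andbT; apply: contra ji => /eqP e; apply/eqP/val_inj; rewrite /= inordK ?e //; lia.
by rewrite addn1 ltnS.
Qed.

Lemma xs_v i j : (i <= d)%N ->
  coef v j (xs i) = coef v j (vs ord0) * \prod_(h < n | (d - i < h)%N) (th j - th h).
Proof.
elim: i => [|i IH] id /=.
  rewrite big_pred0 ?mulr1 // => h; rewrite subn0 ltnNge -ltnS ltn_ord //.
rewrite coef_subC // (gen_coefM (B:=A) (t:=th) (u:=v)) // -mulrBl IH 1?ltnW //.
rewrite [in RHS](bigD1 (inord (d - i))) /=; last by rewrite inordK; lia.
rewrite mulrCA; congr (_ * (_ * _)); apply: eq_bigl => h.
rewrite -val_eqE /= inordK; last lia.
have := ltn_ord h; move: (nat_of_ord h) => H hd.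
case: (ltngtP (d - i) H) => c /=; rewrite ?andbT ?andbF; apply/esym; [apply/idP | apply/negbTE | apply/negbTE]; lia.
Qed.

Definition xb (k : 'I_n) := xs k.

Lemma Ux : Xm xb \in unitmx.
Proof.
apply: Xm_unit => c H; apply/matrixP => k z; rewrite ord1 mxE.
apply: (tri_up (a := fun k => c k 0) (g := fun m k => coef vs m (xs k)) (lo := 0)) => //.
- by move=> m k' km; apply: xs_up.
- by move=> m; have := xs_diag (ltn_ord m) ; rewrite inord_val.
- move=> m _; rewrite -[RHS](cf0 vs m) -H cf_big.
  by apply: eq_bigr => j _; rewrite cfZ.
Qed.

Lemma xs_zero i (j : 'I_n) : (i <= d)%N -> (d - i < j)%N -> coef v j (xs i) = 0.
Proof. by move=> id ij; rewrite xs_v // (bigD1 j) //= subrr mul0r mulr0. Qed.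

Lemma vs0_nz j : coef v j (vs ord0) != 0.
Proof.
apply/eqP => c0; have := cf_vec Uv j j; rewrite eqxx {1}(cf_decomp Ux (v j)) cf_big big1.
  by move/esym/eqP; rewrite oner_eq0.
by move=> k _; rewrite cfZ /xb (xs_v j (ltn_ord k)) c0 mul0r mulr0.
Qed.

Lemma xs_rdiag (k : 'I_n) : coef v (rev_ord k) (xs k) != 0.
Proof.
rewrite (xs_v _ (ltn_ord k)) mulf_neq0 ?vs0_nz //; apply/prodf_neq0 => h hk; rewrite subr_eq0.
apply/eqP => /thI /(congr1 val) /=; move: hk; have := ltn_ord k; move: (nat_of_ord h) (nat_of_ord k) => H L; lia.
Qed.

Lemma coef_xs (w : 'I_n -> 'cV[K]_n) m u :
  coef w m u = \sum_k coef xb k u * coef w m (xs k).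
Proof. by rewrite {1}(cf_decomp Ux u) cf_big; apply: eq_bigr => k _; rewrite cfZ. Qed.

Lemma inU_line (i : 'I_n) u :
  (forall m : 'I_n, (i < m)%N -> coef vs m u = 0) ->
  (forall j : 'I_n, (d - i < j)%N -> coef v j u = 0) ->
  u = coef xb i u *: xs i.
Proof.
move=> Hs Hv.
have up := tri_up (a := fun k => coef xb k u) (g := fun m k => coef vs m (xs k)) (lo := i.+1).
have dn := tri_down (a := fun k => coef xb k u) (g := fun m k => coef v (rev_ord m) (xs k)) (hi := i).
rewrite {1}(cf_decomp Ux u) (bigD1 i) //= big1 ?addr0 // => k ki.
case: (ltngtP i k) => [ik|ki'|/val_inj/eqP]; last by rewrite eq_sym (negbTE ki).
- rewrite up ?scale0r //.
  + by move=> m k' km; apply: xs_up.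
  + by move=> m; have := xs_diag (ltn_ord m) ; rewrite inord_val.
  + by move=> m im; rewrite -coef_xs Hs.
- rewrite dn ?scale0r //.
  + move=> m k' mk; apply: xs_zero => //=; have := ltn_ord k'; move: mk; move: (nat_of_ord m) (nat_of_ord k') => M L; lia.
  + by move=> m; apply: xs_rdiag.
  + move=> m mi; rewrite -coef_xs Hv //=; have := ltn_ord i; move: mi; move: (nat_of_ord m) (nat_of_ord i) => M L; lia.
Qed.

Lemma xs_nz (i : 'I_n) : xs i != 0.
Proof.
have := xs_diag (ltn_ord i); rewrite inord_val; apply: contra => /eqP ->.
by rewrite cf0.
Qed.

Lemma step (phi : 'I_n -> K) (i : 'I_n) : (0 < i)%N ->
  (exists2 u : 'cV[K]_n, u != 0 /\ in_U A As (fun i => th (rev_ord i)) ths i u &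
      (A - (th (rev_ord (inord i.-1)))%:M) *m (As - (ths i)%:M) *m u = phi i *: u) ->
  (ths ord0 - ths i) * coef vs ord0 (xs i) = phi i * coef vs ord0 (xs i.-1).
Proof.
move=> i0 [u [unz [[w Hw] [w' Hw']]] Heig].
have Hs : forall m : 'I_n, (i < m)%N -> coef vs m u = 0.
  move=> m im; rewrite Hw cf_big big1 // => h hi.
  rewrite (gen_E _ _ thsI vsA Us) cfZ cf_vec //.
  case: eqP => [mh|]; last by rewrite mulr0.
  by move: im hi; rewrite mh; move: (nat_of_ord h) (nat_of_ord i) => H I; lia.
have thrI : injective (fun i : 'I_n => th (rev_ord i)) by apply: inj_comp thI rev_ord_inj.
have Hv : forall j : 'I_n, (d - i < j)%N -> coef v j u = 0.
  move=> j ij; rewrite Hw' cf_big big1 // => h hh.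
  rewrite (cf_decomp Uv (w' h)) mulmx_sumr cf_big big1 // => k _.
  rewrite -scalemxAr (prim_idem_act (j := rev_ord k)) //; last by rewrite rev_ordK vA.
  case: eqP => [hk|]; last by rewrite scaler0 cf0.
  rewrite cfZ cf_vec //; case: eqP => [jk|]; last by rewrite mulr0.
  move: ij hh; rewrite hk jk /=; have := ltn_ord k.
  move: (nat_of_ord k) (nat_of_ord i) => L I; lia.
have Eu := inU_line Hs Hv.
set a := coef xb i u in Eu.
have a0 : a != 0 by apply: contra unz => /eqP a0; rewrite Eu a0 scale0r.
set t := th (rev_ord (inord i.-1)).
have Hx : (A - t%:M) *m (As - (ths i)%:M) *m xs i = phi i *: xs i.
  apply: (scaleI a0); rewrite scalemxAr -Eu Heig Eu scalerA mulrC -scalerA //.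
set i' : 'I_n := inord i.-1.
have i'v : nat_of_ord i' = i.-1 by rewrite /i' inordK //; have := ltn_ord i; lia.
set y := (As - (ths i)%:M) *m xs i.
have Ys : forall m : 'I_n, (i' < m)%N -> coef vs m y = 0.
  move=> m im; rewrite /y coef_subC // (gen_coefM (B:=As) (t:=ths) (u:=vs)) // -mulrBl.
  case: (eqVneq m i) => [->|mi]; first by rewrite subrr mul0r.
  rewrite xs_up ?mulr0 //; move: im mi; rewrite i'v -val_eqE /=.
  move: (nat_of_ord m) (nat_of_ord i) i0 => M I; lia.
have Yv : forall j : 'I_n, (d - i' < j)%N -> coef v j y = 0.
  move=> j ij; rewrite /y coef_subC // (@xs_zero i j (ltn_ord i)) ?mulr0 ?subr0; last first.
    by move: ij; rewrite i'v; move: (nat_of_ord j) (nat_of_ord i) i0 => J I; lia.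
  rewrite gen_coefAct //; apply: big1 => k _.
  case: (ltnP (d - i) k) => [ik|ki]; first by rewrite (@xs_zero i k (ltn_ord i)) ?mul0r.
  rewrite tridiag ?mulr0 //; apply/orP; right; move: ij ki; rewrite i'v.
  have := ltn_ord i; move: (nat_of_ord j) (nat_of_ord i) (nat_of_ord k) i0 => J I L; lia.
have Ey := inU_line Ys Yv.
set b := coef xb i' y in Ey.
have xsi : xs i = (A - t%:M) *m xs i'.
  rewrite i'v; have -> : xs i = xs (i.-1).+1 by rewrite prednK.
  rewrite /= /t; congr ((A - (th _)%:M) *m _); apply: val_inj.
  rewrite /= i'v inordK; have := ltn_ord i; lia.
have bphi : b = phi i.
  apply: (scaleIv (xs_nz i)); rewrite -Hx -mulmxA -/y [in RHS]Ey -scalemxAr -xsi //.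
have := congr1 (coef vs ord0) Ey.
rewrite /y coef_subC // (gen_coefM (B:=As) (t:=ths) (u:=vs)) // -mulrBl => ->.
by rewrite cfZ bphi /xb i'v.
Qed.

Section Final.
Variable phi : 'I_n -> K.
Hypothesis Hsplit : is_second_split_seq A As th ths phi.

Lemma prod_step k : (k <= d)%N ->
  coef vs ord0 (xs k) * \prod_(h < n | (0 < h)%N && (h <= k)%N) (ths ord0 - ths h)
  = \prod_(h < n | (0 < h)%N && (h <= k)%N) phi h.
Proof.
elim: k => [|k IH] kd.
  rewrite !big_pred0 => [|h|h]; try by case: (nat_of_ord h) => [|[]].
  by rewrite mulr1 /= cf_vec // eqxx.
have kn : (k.+1 < n)%N by [].
have Hp : forall h : 'I_n, ((0 < h)%N && (h <= k.+1)%N) && (h != inord k.+1)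
    = (0 < h)%N && (h <= k)%N.
  move=> h; rewrite -val_eqE /= inordK //; move: (nat_of_ord h) => H.
  apply/idP/idP => [/andP [/andP [a b] c]|/andP [a b]]; apply/andP; split => //.
  - move: b c; rewrite leq_eqVlt => /orP [/eqP -> |]; first by rewrite eqxx.
    by rewrite ltnS.
  - by rewrite a /= (leq_trans b).
  - by apply/eqP => e; move: b; rewrite e; lia.
have i0 : (0 < (inord k.+1 : 'I_n))%N by rewrite inordK.
have S : (ths ord0 - ths (inord k.+1)) * coef vs ord0 (xs k.+1)
    = phi (inord k.+1) * coef vs ord0 (xs k).
  by have := step i0 (Hsplit i0); rewrite inordK //; apply.
rewrite (bigD1 (inord k.+1)); last by rewrite inordK ?leqnn.
rewrite [in RHS](bigD1 (inord k.+1)); last by rewrite inordK ?leqnn.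
rewrite (eq_bigl _ _ Hp) [in RHS](eq_bigl _ _ Hp).
rewrite mulrA [coef vs ord0 (xs k.+1) * _]mulrC S -mulrA IH //.
by apply: ltnW.
Qed.

Lemma tr_formula :
  \tr (prim_idem A th ord0 *m prim_idem As ths ord0) =
  (\prod_(i < n | (0 < i)%N) phi i) /
  ((\prod_(h < n | (0 < h)%N) (th ord0 - th h)) *
   (\prod_(h < n | (0 < h)%N) (ths ord0 - ths h))).
Proof.
set eta := \prod_(h < n | (0 < h)%N) (th ord0 - th h).
set etas := \prod_(h < n | (0 < h)%N) (ths ord0 - ths h).
have T1 : \tr (prim_idem A th ord0 *m prim_idem As ths ord0) =
    coef vs ord0 (v ord0) * coef v ord0 (vs ord0).
  rewrite (cf_trace Uv) (bigD1 ord0) //= big1 ?addr0.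
    rewrite -mulmxA (gen_E _ _ thI vA Uv) cfZ cf_vec // eqxx mulr1.
    by rewrite (gen_E _ _ thsI vsA Us) cfZ.
  move=> j j0; rewrite -mulmxA (gen_E _ _ thI vA Uv) cfZ cf_vec //.
  by rewrite (negbTE j0) mulr0.
have T2 : xs d = coef v ord0 (xs d) *: v ord0.
  rewrite {1}(cf_decomp Uv (xs d)) (bigD1 ord0) //= big1 ?addr0 // => j j0.
  rewrite (@xs_zero d j (leqnn d)) ?scale0r // subnn lt0n.
  by apply: contra j0 => /eqP jz; apply/eqP/val_inj.
have T3 : coef v ord0 (xs d) = coef v ord0 (vs ord0) * eta.
  by rewrite (xs_v _ (leqnn d)) subnn.
have T4 : coef vs ord0 (xs d) = coef v ord0 (xs d) * coef vs ord0 (v ord0).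
  by rewrite {1}T2 cfZ.
have T5 := prod_step (leqnn d).
have Ep : forall h : 'I_n, ((0 < h)%N && (h <= d)%N) = (0 < h)%N.
  by move=> h; rewrite (leq_ord h) andbT.
rewrite (eq_bigl _ _ Ep) (eq_bigl _ _ Ep) in T5.
have eta0 : eta != 0.
  apply/prodf_neq0 => h h0; rewrite subr_eq0; apply/eqP => /thI /(congr1 val) /=.
  by move=> e; rewrite -e in h0.
have etas0 : etas != 0.
  apply/prodf_neq0 => h h0; rewrite subr_eq0; apply/eqP => /thsI /(congr1 val) /=.
  by move=> e; rewrite -e in h0.
rewrite T1 -T5 T4 T3 -/etas.
move: (coef vs ord0 (v ord0)) (coef v ord0 (vs ord0)) => p q.
have -> : q * eta * p * etas = (p * q) * (eta * etas) by ring.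
by rewrite mulfK // mulf_neq0.
Qed.

End Final.

End Leo.

End Aux.

Theorem theorem23p7 (K : fieldType) (d : nat) (A As : 'M[K]_d.+1)
    (th ths : 'I_d.+1 -> K) (phi : 'I_d.+1 -> K) :
  leonard_system A As th ths ->
  is_second_split_seq A As th ths phi ->
  (\tr (prim_idem A th ord0 *m prim_idem As ths ord0))^-1 =
    (\prod_(h < d.+1 | (0 < h)%N) (th ord0 - th h)) *
    (\prod_(h < d.+1 | (0 < h)%N) (ths ord0 - ths h)) /
    \prod_(i < d.+1 | (0 < i)%N) phi i.
Proof.
move=> [[[thI thE] [thsI thsE]] [L1 L2 L3 L4]] Hs.
have : forall j, exists u : 'cV[K]_d.+1, A *m u = th j *: u /\ u != 0.
  by move=> j; have [u ? ?] := Aux.eig_col (thE j); exists u.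
case/fin_all_exists => v Hv.
have : forall j, exists u : 'cV[K]_d.+1, As *m u = ths j *: u /\ u != 0.
  by move=> j; have [u ? ?] := Aux.eig_col (thsE j); exists u.
case/fin_all_exists => vs Hvs.
rewrite (Aux.tr_formula thI thsI (fun j => (Hv j).1) (fun j => (Hv j).2)
   (fun j => (Hvs j).1) (fun j => (Hvs j).2) L1 L3 L4 Hs).
by rewrite invf_div.
Qed.
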